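(* Let $S=\{f_1,\dots,f_n\}$ be a set of polynomials in $\mathbb{Q}[\alpha_1,\dots,\alpha_r]$ and let $\sigma$ be a permutation of $\{\alpha_1,\dots,\alpha_r\}$. If $S$ is reducible with respect to $\sigma$, then every subset $L\subseteq S$ is reducible with respect to $\sigma$.
   Context: ''Irreducible factors'' are taken over $\mathbb{Q}$ and polynomials differing by a nonzero constant are identified. A compatibility graph for a finite set $S$ of polynomials is a graph with vertex set $S$. Reduction step: given $(S,C)$ with $S=\{f_1,\dots,f_n\}$ and a variable $\alpha$, the step is undefined if some $f_i$ has degree $>1$ in $\alpha$; otherwise write $f_i=g_i\alpha+h_i$ with $g_i=\partial f_i/\partial\alpha$, $h_i=f_i|_{\alpha=0}$, let $S^4=\{g_i\}\cup\{h_i\}\cup\{g_ih_j-h_ig_j: i\neq j,\ f_if_j\in E(C)\}$ and let $S_{(\alpha)}$ be the set of irreducible factors of members of $S^4$. Its compatibility graph $C_{(\alpha)}$: attach to each $m\in S_{(\alpha)}$ the labels $\{0,i\}$ whenever $m\mid g_i$; $\{i,\infty\}$ whenever $m\mid h_i$, and also $\{0,i\}$ if $h_i=f_i$; $\{i,j\}$ whenever $m\mid g_ih_j-h_ig_j$ with $f_i,f_j$ compatible; $m,m'$ are adjacent iff some label of $m$ meets some label of $m'$. Let $S_{[\sigma(1)]}=S_{(\sigma(1))}$ computed from $(S,\text{complete graph})$, and for $k\ge 2$ let $S_{[\sigma(1),\dots,\sigma(k)]}=\bigcap_{i} S_{[\sigma(1),\dots,\widehat{\sigma(i)},\dots,\sigma(k)](\sigma(i))}$,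 the intersection over those $i\le k$ for which the step is defined (undefined if there are none), with compatibility graph whose edge set is the intersection of the corresponding edge sets. $S$ is reducible with respect to $\sigma$ if for all $1\le i\le r-1$ the set $S_{[\sigma(1),\dots,\sigma(i)]}$ is defined and all its members have degree $\le 1$ in $\sigma(i+1)$. *)

(* Defs.v *)
From HB Require Import structures.
From mathcomp Require Import all_boot all_order all_algebra.
From mathcomp Require Import fingroup perm.
From mathcomp Require Import mpoly.
Set Implicit Arguments. Unset Strict Implicit. Unset Printing Implicit Defensive.
Import Order.TTheory GRing.Theory.
Local Open Scope ring_scope.

Section Reduction.
Variable r : nat.
Local Notation P := {mpoly rat[r]}.

(* A "set of polynomials" (identified up to nonzero constants) is encoded as
   a predicate closed under multiplication by nonzero rationals; a
   compatibility graph as a binary relation on polynomials (edge relation). *)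
Definition pset := P -> Prop.
Definition pgraph := P -> P -> Prop.

Definition assoc (p q : P) : Prop := exists2 c : rat, c != 0 & p = c *: q.

Definition pdvd (m p : P) : Prop := exists q : P, p = m * q.

Definition mirreducible (p : P) : Prop :=
  [/\ p != 0, p \isn't a GRing.unit &
      forall a b : P, p = a * b -> a \is a GRing.unit \/ b \is a GRing.unit].

Definition degv (i : 'I_r) (p : P) : nat := (\max_(m <- msupp p) m i)%N.

Definition setOf (s : seq P) : pset := fun f => exists2 f0, f0 \in s & assoc f f0.

Definition complete (S : pset) : pgraph :=
  fun f f' => [/\ S f, S f' & ~ assoc f f'].

Definition gpart (a : 'I_r) (f : P) : P := mderiv a f.
Definition hpart (a : 'I_r) (f : P) : P :=
  f \mPo [tuple (if j == a then 0 else 'X_j) | j < r].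

Definition step_defined (S : pset) (a : 'I_r) : Prop :=
  forall f, S f -> (degv a f <= 1)%N.

Definition S4 (S : pset) (C : pgraph) (a : 'I_r) : pset := fun p =>
  (exists2 f, S f & p = gpart a f) \/
  (exists2 f, S f & p = hpart a f) \/
  (exists f f', [/\ S f, S f', C f f' &
      p = gpart a f * hpart a f' - hpart a f * gpart a f']).

Definition stepS (S : pset) (C : pgraph) (a : 'I_r) : pset := fun m =>
  mirreducible m /\ exists p, [/\ S4 S C a p, p != 0 & pdvd m p].

(* label entries: 0, an index i (represented by f_i), infinity *)
Inductive lab := L0 | LIdx of P | LInf.

Definition labeq (x y : lab) : Prop :=
  match x, y with
  | L0, L0 => True
  | LInf, LInf => True
  | LIdx f, LIdx f' => assoc f f'
  | _, _ => False
  end.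

Definition haslabel (S : pset) (C : pgraph) (a : 'I_r) (m : P) (x y : lab) : Prop :=
  (exists2 f, S f & [/\ x = L0, y = LIdx f & pdvd m (gpart a f)]) \/
  (exists2 f, S f & [/\ x = LIdx f, y = LInf & pdvd m (hpart a f)]) \/
  (exists2 f, S f & [/\ hpart a f = f, x = L0, y = LIdx f & pdvd m (hpart a f)]) \/
  (exists f f', [/\ S f /\ S f', C f f', x = LIdx f, y = LIdx f' &
      pdvd m (gpart a f * hpart a f' - hpart a f * gpart a f')]).

Definition meet (x y x' y' : lab) : Prop :=
  labeq x x' \/ labeq x y' \/ labeq y x' \/ labeq y y'.

Definition stepC (S : pset) (C : pgraph) (a : 'I_r) : pgraph := fun m m' =>
  [/\ stepS S C a m, stepS S C a m', ~ assoc m m' &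
      exists x y x' y', [/\ haslabel S C a m x y, haslabel S C a m' x' y'
                          & meet x y x' y']].

(* S_[l] for a list l of variables: returns (defined?, set, graph).
   The fuel k is the length of l; k = 0 gives (S, complete graph), so that
   the uniform formula at k = 1 gives S_[v] = S_(v) computed from
   (S, complete graph). *)
Fixpoint red (S : pset) (k : nat) (l : seq 'I_r) : Prop * pset * pgraph :=
  match k with
  | 0 => (True, S, complete S)
  | k'.+1 =>
    (* the index i of the paper corresponds to a decomposition
       l = l1 ++ v :: l2, with v = sigma(i) and l1 ++ l2 the list with
       sigma(i) removed *)
    let ok l1 v l2 := [/\ l = l1 ++ v :: l2, (red S k' (l1 ++ l2)).1.1 &
                          step_defined (red S k' (l1 ++ l2)).1.2 v] in
    (exists l1 v l2, ok l1 v l2,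
     fun m => forall l1 v l2, ok l1 v l2 ->
        stepS (red S k' (l1 ++ l2)).1.2 (red S k' (l1 ++ l2)).2 v m,
     fun m m' => forall l1 v l2, ok l1 v l2 ->
        stepC (red S k' (l1 ++ l2)).1.2 (red S k' (l1 ++ l2)).2 v m m')
  end.

Definition Sbr (S : pset) (l : seq 'I_r) := red S (size l) l.

(* S is reducible w.r.t. sigma: for 1 <= i <= r-1, S_[sigma(1..i)] is defined
   and all its members have degree <= 1 in sigma(i+1).  With 0-based
   ordinals j = i ranges over 1..r-1, the first i variables are
   take j [seq sigma k | k <- enum 'I_r] and sigma(i+1) is sigma j. *)
Definition reducible (S : pset) (sigma : {perm 'I_r}) : Prop :=
  forall j : 'I_r, (0 < j)%N ->
    let l := take j [seq sigma k | k <- enum 'I_r] in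
    (Sbr S l).1.1 /\ forall m, (Sbr S l).1.2 m -> (degv (sigma j) m <= 1)%N.

End Reduction.

(* Main.v *)
Require Import Defs.
From HB Require Import structures.
From mathcomp Require Import all_boot all_order all_algebra.
From mathcomp Require Import fingroup perm.
From mathcomp Require Import mpoly.

Set Implicit Arguments.
Section Mono.
Variable r : nat.
Implicit Types S L : pset r.
Implicit Types C D : pgraph r.

Lemma S4_mono S L C D a : (forall f, L f -> S f) -> (forall f g, D f g -> C f g) ->
  forall p, S4 L D a p -> S4 S C a p.
Proof.
move=> hL hD p [[f Hf ->]|[[f Hf ->]|[f [f' [H1 H2 H3 ->]]]]].
- by left; exists f; auto.
- by right; left; exists f; auto.
- by right; right; exists f, f'; split; auto.
Qed.

Lemma stepS_mono S L C D a : (forall f, L f -> S f) -> (forall f g, D f g -> C f g) ->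
  forall m, stepS L D a m -> stepS S C a m.
Proof.
move=> hL hD m [Hi [p [Hp H0 Hd]]]; split => //; exists p; split => //.
exact: (@S4_mono S L C D a hL hD p Hp).
Qed.

Lemma haslabel_mono S L C D a : (forall f, L f -> S f) -> (forall f g, D f g -> C f g) ->
  forall m x y, haslabel L D a m x y -> haslabel S C a m x y.
Proof.
move=> hL hD m x y [[f Hf H]|[[f Hf H]|[[f Hf H]|[f [f' [[H1 H2] H3 H4 H5 H6]]]]]].
- by left; exists f; auto.
- by right; left; exists f; auto.
- by right; right; left; exists f; auto.
- by right; right; right; exists f, f'; split; auto.
Qed.

Lemma stepC_mono S L C D a : (forall f, L f -> S f) -> (forall f g, D f g -> C f g) ->
  forall m m', stepC L D a m m' -> stepC S C a m m'.
Proof.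
move=> hL hD m m' [H1 H2 H3 [x [y [x' [y' [H4 H5 H6]]]]]].
split; try exact: (@stepS_mono S L C D a hL hD).
- by [].
- exists x, y, x', y'; split => //; exact: (@haslabel_mono S L C D a hL hD).
Qed.

Lemma red_mono S L : (forall f, L f -> S f) -> forall k l,
  [/\ (red S k l).1.1 -> (red L k l).1.1,
      forall m, (red L k l).1.2 m -> (red S k l).1.2 m &
      forall m m', (red L k l).2 m m' -> (red S k l).2 m m'].
Proof.
move=> hL; elim => [|k IH] l /=.
  split => //; move=> m m' [H1 H2 H3]; split; auto.
have okLS : forall l1 v l2,
  [/\ l = l1 ++ v :: l2, (red S k (l1 ++ l2)).1.1 & step_defined (red S k (l1 ++ l2)).1.2 v] ->
  [/\ l = l1 ++ v :: l2, (red L k (l1 ++ l2)).1.1 & step_defined (red L k (l1 ++ l2)).1.2 v].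
  move=> l1 v l2 [E D Sd]; have [I1 I2 I3] := IH (l1 ++ l2).
  split; auto => f Hf; apply: Sd; auto.
split.
- by move=> [l1 [v [l2 ok]]]; exists l1, v, l2; apply: okLS.
- move=> m Hm l1 v l2 ok; have [I1 I2 I3] := IH (l1 ++ l2).
  exact: (@stepS_mono _ _ _ _ v I2 I3 m (Hm _ _ _ (okLS _ _ _ ok))).
- move=> m m' Hm l1 v l2 ok; have [I1 I2 I3] := IH (l1 ++ l2).
  exact: (@stepC_mono _ _ _ _ v I2 I3 m m' (Hm _ _ _ (okLS _ _ _ ok))).
Qed.

End Mono.

Lemma Sbr_mono r (S L : pset r) : (forall f, L f -> S f) -> forall l,
  ((Sbr S l).1.1 -> (Sbr L l).1.1) /\ forall m, (Sbr L l).1.2 m -> (Sbr S l).1.2 m.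
Proof. move=> hL l; rewrite /Sbr; have [A B _] := @red_mono r S L hL (size l) l; by split. Qed.

Lemma fin_step r (S L : pset r) (v : 'I_r) (l : seq 'I_r) : (forall f, L f -> S f) ->
  ((Sbr S l).1.1 /\ forall m, (Sbr S l).1.2 m -> (degv v m <= 1)%N) ->
  ((Sbr L l).1.1 /\ forall m, (Sbr L l).1.2 m -> (degv v m <= 1)%N).
Proof.
move=> hL [D H]; have [A B] := @Sbr_mono r S L hL l.
split; first exact: A D.
move=> m Hm; exact: H _ (B _ Hm).
Qed.

Theorem mainTheorem4 (r : nat) (S L : seq {mpoly rat[r]}) (sigma : {perm 'I_r}) :
  (forall f, setOf L f -> setOf S f) ->
  reducible (setOf S) sigma ->
  reducible (setOf L) sigma.
Proof.
move=> hL hS j hj.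
have X := (@fin_step r (setOf S) (setOf L) _ _ hL (hS j hj)).
exact X.
Qed.
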